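(* Let $\Phi:\ell^\infty(\mathbb Z)\to\ell^\infty(\mathbb Z)$ be a bounded linear map commuting with the backward shift $B$, $(Bv)_n=v_{n+1}$, and let $\mathcal I$ be the identity map. If $\Phi$ is idempotent, then either $\Phi=\Phi^{s}$ (i.e. $\Phi$ is singular), or $\Phi=\mathcal I-\Psi$ where $\Psi$ is a singular, idempotent linear map commuting with $B$.
   Context: For such $\Phi$, let $\phi_0(v)=\Phi(v)_0$, so $\Phi(v)_n=\phi_0(B^nv)$. Write $\phi_0=\phi^{ac}+\phi^s$ with $\phi^{ac}$ weak*-continuous (given by an $\ell^1(\mathbb Z)$ vector) and $\phi^s$ vanishing on $c_0(\mathbb Z)$ (the null sequences), and set $\Phi^{ac}(v)=(\phi^{ac}(B^nv))_n$, $\Phi^s(v)=(\phi^s(B^nv))_n$. A linear map on $\ell^\infty(\mathbb Z)$ is called singular if it annihilates $c_0(\mathbb Z)$. *)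

(* Defs.v *)
From mathcomp Require Import all_boot all_order all_algebra.
From mathcomp Require Import reals.
Set Implicit Arguments. Unset Strict Implicit. Unset Printing Implicit Defensive.
Import Order.TTheory GRing.Theory Num.Theory.
Local Open Scope ring_scope.

Definition linf {R : realType} (v : int -> R) : Prop :=
  exists M : R, forall n : int, `|v n| <= M.

Definition c0 {R : realType} (v : int -> R) : Prop :=
  forall e : R, 0 < e -> exists N : nat, forall n : int, (N <= `|n|)%N -> `|v n| <= e.

Definition bshift {R : realType} (v : int -> R) : int -> R := fun n => v (n + 1).

(* A (possibly unbounded) linear map on l^infty(Z), represented by a function
   on all sequences of which only the restriction to l^infty(Z) matters. *)
Definition linf_linear_map {R : realType} (Phi : (int -> R) -> (int -> R)) : Prop :=
  (forall v, linf v -> linf (Phi v)) /\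
  (forall (a : R) v w, linf v -> linf w ->
     Phi (fun n => a * v n + w n) = (fun n => a * Phi v n + Phi w n)).

Definition linf_bounded_map {R : realType} (Phi : (int -> R) -> (int -> R)) : Prop :=
  linf_linear_map Phi /\
  exists C : R, forall (v : int -> R) (M : R),
    (forall n, `|v n| <= M) -> forall n, `|Phi v n| <= C * M.

Definition commutes_with_B {R : realType} (Phi : (int -> R) -> (int -> R)) : Prop :=
  forall v, linf v -> Phi (bshift v) = bshift (Phi v).

Definition idempotent_map {R : realType} (Phi : (int -> R) -> (int -> R)) : Prop :=
  forall v, linf v -> Phi (Phi v) = Phi v.

Definition singular_map {R : realType} (Phi : (int -> R) -> (int -> R)) : Prop :=
  forall v, linf v -> c0 v -> Phi v = (fun _ => 0).

(* Main.v *)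
Require Import Defs.
From mathcomp Require Import all_boot all_order all_algebra.
From mathcomp Require Import reals.
From mathcomp Require Import boolp classical_sets topology normedtype trigo.
From mathcomp Require Import ring lra zify.
Import Order.TTheory GRing.Theory Num.Theory.
Import numFieldNormedType.Exports.
Local Open Scope ring_scope.
Set Implicit Arguments. Unset Strict Implicit. Unset Printing Implicit Defensive.

Definition W (L : nat) : seq int := [seq (i%:Z - L%:Z) | i <- iota 0 (2*L+1)].
Lemma W_uniq L : uniq (W L).
Proof. rewrite map_inj_uniq ?iota_uniq // => x y /eqP; rewrite subr_eq subrK => /eqP. by case. Qed.
Lemma mem_W L k : (k \in W L) = (`|k| <= L)%N.
Proof.
apply/mapP/idP => [[i]|h].
  rewrite mem_iota => hi ->; lia.
exists (absz (k + L%:Z)); first by rewrite mem_iota; lia.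
lia.
Qed.

Lemma sum_eq_supp (R : realType) (s t : seq int) (F : int -> R) : uniq s -> uniq t ->
  (forall x, F x != 0 -> x \in s /\ x \in t) -> \sum_(x <- s) F x = \sum_(x <- t) F x.
Proof.
move=> us ut h; apply: perm_big_supp; apply: uniq_perm; rewrite ?filter_uniq //.
move=> x; rewrite !mem_filter; case: (eqVneq (F x) 0) => //= /h [-> ->] //.
Qed.

Section Window.
Variable R : realType.

Definition gw (L : nat) (n : int) : R :=
  if (absz n <= L)%N then 1 - (absz n)%:R / L%:R else 0.

Lemma gw0 L : gw L 0 = 1.
Proof. by rewrite /gw /= mul0r subr0. Qed.

Lemma gw_supp L n : n \notin W L -> gw L n = 0.
Proof. by rewrite mem_W /gw => /negbTE ->. Qed.

Lemma gw_bnd L n : (0 < L)%N -> `|gw L n| <= 1.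
Proof.
move=> L0; rewrite /gw; case: ifP => h; last by rewrite normr0.
have Lp : (0 : R) < L%:R by rewrite ltr0n.
have h1 : (absz n)%:R / L%:R <= (1 : R).
  by rewrite ler_pdivrMr // mul1r ler_nat.
have h2 : 0 <= (absz n)%:R / (L%:R : R) by rewrite divr_ge0.
rewrite ler_norml; apply/andP; split; lra.
Qed.

Lemma gw_lip L n k : (0 < L)%N -> `|gw L (n - k) - gw L n| <= (absz k)%:R / L%:R.
Proof.
move=> L0.
have Lp : (0 : R) < L%:R by rewrite ltr0n.
set P := (absz (n - k))%:R / (L%:R : R).
set Q := (absz n)%:R / (L%:R : R).
set K := (absz k)%:R / (L%:R : R).
have hPQ : P <= Q + K.
  rewrite /P /Q /K -mulrDl ler_pM2r ?invr_gt0 // -natrD ler_nat; lia.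
have hQP : Q <= P + K.
  rewrite /P /Q /K -mulrDl ler_pM2r ?invr_gt0 // -natrD ler_nat; lia.
have cP : (absz (n - k) <= L)%N = (P <= 1).
  by rewrite /P ler_pdivrMr // mul1r ler_nat.
have cQ : (absz n <= L)%N = (Q <= 1).
  by rewrite /Q ler_pdivrMr // mul1r ler_nat.
rewrite /gw -/P -/Q cP cQ.
have hK : 0 <= K by rewrite /K divr_ge0.
have hP : 0 <= P by rewrite /P divr_ge0.
have hQ : 0 <= Q by rewrite /Q divr_ge0.
case: (leP P 1) => h1; case: (leP Q 1) => h2; rewrite ler_norml; apply/andP; split; lra.
Qed.

End Window.

Section RealAux.
Variable R : realType.
Lemma nM (a b A B : R) : `|a| <= A -> `|b| <= B -> `|a * b| <= A * B.
Proof. by move=> h1 h2; rewrite normrM; apply: ler_pM. Qed.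

Lemma n4 (t1 t2 t3 t4 a b c d : R) : `|t1| <= a -> `|t2| <= b -> `|t3| <= c -> `|t4| <= d ->
  `|t1 + t2 + t3 + t4| <= a + b + c + d.
Proof.
move=> h1 h2 h3 h4; do 3 (apply: le_trans (ler_normD _ _) _; apply: lerD => //).
Qed.

Lemma comb1 (cs sn X Y d C : R) : `|cs| <= C -> `|sn| <= C ->
  `|X - cs| <= d -> `|Y + sn| <= d -> `|X - (cs * X + sn * Y)| <= C * d ->
  `|cs - cs * cs + sn * sn| <= (3 * C + 1) * d.
Proof.
move=> h1 h2 h3 h4 h5.
have -> : cs - cs * cs + sn * sn = - (X - cs) + (X - (cs * X + sn * Y)) + cs * (X - cs) + sn * (Y + sn) by ring.
have -> : (3 * C + 1) * d = d + C * d + C * d + C * d by ring.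
by apply: n4; rewrite ?normrN //; apply: nM.
Qed.

Lemma comb2 (cs sn X Y d C : R) : `|cs| <= C -> `|sn| <= C ->
  `|X - cs| <= d -> `|Y + sn| <= d -> `|Y - (cs * Y - sn * X)| <= C * d ->
  `|sn - 2 * cs * sn| <= (3 * C + 1) * d.
Proof.
move=> h1 h2 h3 h4 h5.
have -> : sn - 2 * cs * sn = (Y + sn) - (Y - (cs * Y - sn * X)) - cs * (Y + sn) + sn * (X - cs) by ring.
have -> : (3 * C + 1) * d = d + C * d + C * d + C * d by ring.
by apply: n4; rewrite ?normrN //; apply: nM.
Qed.
End RealAux.

Lemma lim_le (R : realType) (x a b : R) : 0 <= b ->
  (forall L : nat, (0 < L)%N -> x <= a + b / L%:R) -> x <= a.
Proof.
move=> b0 h; rewrite leNgt; apply/negP => hxa.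
have xa : 0 < x - a by rewrite subr_gt0.
set L := (Num.Def.archi_bound (b / (x - a))).+1.
have hb := archi_boundP (divr_ge0 b0 (ltW xa)).
have Lp : (0:R) < L%:R by rewrite ltr0n.
have hL : b / (x - a) < L%:R.
  apply: lt_trans hb _; rewrite ltr_nat /L; exact: ltnSn.
have : b / L%:R < x - a.
  rewrite ltr_pdivrMr //; rewrite ltr_pdivrMr // in hL; by rewrite mulrC.
have := h L isT; lra.
Qed.

Lemma cont_sum (R : realType) (s : seq int) (F : int -> R -> R) :
  (forall k, continuous (F k)) -> continuous (fun t => \sum_(k <- s) F k t).
Proof.
move=> hF; elim: s => [|k s IH].
  have -> : (fun t : R => \sum_(k <- [::]) F k t) = fun _ => 0.
    by apply: funext => t; rewrite big_nil.
  exact: cst_continuous.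
have -> : (fun t : R => \sum_(j <- k :: s) F j t) = (F k \+ (fun t => \sum_(j <- s) F j t)).
  by apply: funext => t; rewrite big_cons.
by move=> x; apply: continuousD; [exact: hF|exact: IH].
Qed.

Lemma cont_trig (R : realType) (a r : R) : continuous (fun t : R => a * cos (r * t)).
Proof.
move=> x; apply: continuousM; first exact: cst_continuous.
apply: (continuous_comp (f := fun t => r * t) (g := @cos R)); last exact: continuous_cos.
apply: continuousM; [exact: cst_continuous | by move=> y; exact: cvg_id].
Qed.

Lemma const_ivt (R : realType) (f : R -> R) (h : R) : continuous f -> 0 <= h -> h <= 1/16 ->
  (forall t, `|f t| <= h \/ `|f t - 1| <= h) ->
  exists c : R, (c = 0 \/ c = 1) /\ forall t, 0 <= t -> `|f t - c| <= h.
Proof.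
move=> fc h0 h1 hf.
have key : forall t, 0 <= t -> `|f 0| <= h -> `|f t - 1| <= h -> False.
  move=> t t0 a b.
  have [c _ fc2] : exists2 c, c \in `[0, t] & f c = 1/2.
    apply: IVT => //; first exact: continuous_subspaceT.
    move: a b; rewrite !ler_norml => /andP[a1 a2] /andP[b1 b2].
    rewrite ge_min le_max; apply/andP; split; apply/orP; [left|right]; lra.
  by case: (hf c); rewrite fc2 ler_norml => /andP[]; lra.
have key2 : forall t, 0 <= t -> `|f 0 - 1| <= h -> `|f t| <= h -> False.
  move=> t t0 a b.
  have [c _ fc2] : exists2 c, c \in `[0, t] & f c = 1/2.
    apply: IVT => //; first exact: continuous_subspaceT.
    move: a b; rewrite !ler_norml => /andP[a1 a2] /andP[b1 b2].
    rewrite ge_min le_max; apply/andP; split; apply/orP; [right|left]; lra.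
  by case: (hf c); rewrite fc2 ler_norml => /andP[]; lra.
case: (hf 0) => a.
  exists 0; split; first by left.
  move=> t t0; rewrite subr0; case: (hf t) => // b; exfalso; exact: key t t0 a b.
exists 1; split; first by right.
move=> t t0; case: (hf t) => // b; exfalso; exact: key2 t t0 a b.
Qed.

Lemma sin_per (R : realType) (y : R) (m : int) : sin (y + m%:~R * (pi *+ 2)) = sin y.
Proof.
case: m => n.
  by rewrite -[(Posz n)%:~R]/(n%:R) mulr_natl (periodicn (@sinD2pi R)).
rewrite NegzE -{2}[y](_ : (y - (n.+1)%:R * (pi *+ 2)) + (pi *+ 2) *+ n.+1 = y).
  rewrite (periodicn (@sinD2pi R)); congr sin; rewrite -[(- (Posz n.+1))%:~R]/(- (n.+1)%:R); ring.
by rewrite -mulr_natl; ring.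
Qed.

Lemma cos_sum (R : realType) (M : nat) (m : int) : (0 < M)%N -> (absz m < M)%N ->
  \sum_(0 <= j < M) cos (m%:~R * (j%:R * (pi *+ 2 / M%:R))) = if m == 0 then M%:R else (0:R).
Proof.
move=> M0 hm.
case: eqP => [->|mn0].
  under eq_bigr do rewrite mul0r cos0.
  by rewrite sumr_const_nat subn0.
set x : R := m%:~R * (pi *+ 2 / M%:R).
have Mp : (0:R) < M%:R by rewrite ltr0n.
have e1 : forall j : nat, cos (m%:~R * (j%:R * (pi *+ 2 / M%:R))) * (2 * sin (x / 2)) =
   sin ((j.+1)%:R * x - x / 2) - sin (j%:R * x - x / 2).
  move=> j; rewrite -[(j.+1)%:R * x - x / 2](_ : j%:R * x + x / 2 = _); last first.
    by rewrite -natr1; field.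
  rewrite sinD sinB.
  have -> : m%:~R * (j%:R * (pi *+ 2 / M%:R)) = j%:R * x by rewrite /x; ring.
  ring.
have hs : sin (x / 2) != 0.
  have xe : x / 2 = m%:~R * (pi / M%:R) by rewrite /x; rewrite -mulr_natl; field; rewrite gt_eqF.
  have hp : 0 < (pi : R) / M%:R by apply: divr_gt0 => //; exact: pi_gt0.
  have key : forall n : nat, (0 < n < M)%N -> 0 < sin (n%:R * (pi / (M%:R:R))).
    move=> n /andP[n0 nM]; apply: sin_gt0_pi; apply/andP; split.
      by rewrite mulr_gt0 // ltr0n.
    by rewrite mulrCA gtr_pMr ?pi_gt0 // ltr_pdivrMr // mul1r ltr_nat.
  rewrite xe; case: m hm mn0 {x e1 xe} => n hm mn0.
    apply/lt0r_neq0; apply: key; apply/andP; split => //.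
    by case: n mn0 {hm} => // /(_ erefl).
  rewrite NegzE mulNr sinN oppr_eq0; apply/lt0r_neq0; apply: key.
  by apply/andP; split.
have : (\sum_(0 <= j < M) cos (m%:~R * (j%:R * (pi *+ 2 / M%:R)))) * (2 * sin (x / 2)) = 0.
  rewrite mulr_suml (eq_bigr _ (fun j _ => e1 j)) telescope_sumr //.
  have -> : M%:R * x - x / 2 = - (x / 2) + m%:~R * (pi *+ 2).
    by rewrite /x; field; rewrite gt_eqF.
  by rewrite sin_per mul0r add0r subrr.
move/eqP; rewrite mulf_eq0 mulf_eq0 (negbTE hs) orbF pnatr_eq0 /= orbF => /eqP //.
Qed.


Lemma near_lem (R : realType) (c s h : R) : 0 <= h -> h <= 1/64 ->
  `|c - c * c + s * s| <= h -> `|s - 2 * c * s| <= h ->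
  `|s| <= 2 * h /\ (`|c| <= 4 * h \/ `|c - 1| <= 4 * h).
Proof.
move=> h0 h1; rewrite !ler_norml => /andP[a1 a2] /andP[b1 b2].
have hs : `|s| <= 2 * h.
  rewrite ler_norml; case: (lerP c (1/4)) => hc1.
    apply/andP; split; nra.
  case: (lerP (3/4) c) => hc2.
    apply/andP; split; nra.
  exfalso; nra.
move: hs; rewrite ler_norml => /andP[s1 s2].
split; first by apply/andP.
case: (lerP c (1/2)) => hc; [left|right]; apply/andP; split; nra.
Qed.

Lemma small0 (R : realType) (x : R) : (forall h, 0 < h -> h <= 1/64 -> `|x| <= 6 * h) -> x = 0.
Proof.
move=> H; apply/eqP; apply/negP => hx.
have xp : 0 < `|x| by rewrite normr_gt0; apply/negP.
set h := Num.min (1/64) (`|x| / 12).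
have hp : 0 < h by rewrite lt_min; apply/andP; split; lra.
have h1 : h <= 1/64 by rewrite ge_min lexx.
have h2 : h <= `|x| / 12 by rewrite ge_min lexx orbT.
have := H h hp h1; lra.
Qed.

Lemma zero_small (R : realType) (x C : R) : 0 <= C -> (forall eps, 0 < eps -> `|x| <= C * eps) -> x = 0.
Proof.
move=> C0 H; apply: small0 => h hp _.
have := H (h / (C + 1)) ltac:(apply: divr_gt0; lra).
move=> hx; apply: le_trans hx _.
rewrite mulrA ler_pdivrMr; last lra.
nra.
Qed.

Section Basic.
Variable R : realType.
Implicit Types v w : int -> R.

Definition dlt (j : int) : int -> R := fun n => if n == j then 1 else 0.

Lemma linf_bnd v M : (forall n, `|v n| <= M) -> linf v.
Proof. by move=> h; exists M. Qed.

Lemma linf0 : linf (fun _ : int => (0:R)).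
Proof. by exists 0 => n; rewrite normr0. Qed.

Lemma linf_comb (a : R) v w : linf v -> linf w -> linf (fun n => a * v n + w n).
Proof.
move=> [M hM] [M' hM']; exists (`|a| * M + M') => n.
apply: (le_trans (ler_normD _ _)); rewrite normrM.
by apply: lerD => //; apply: ler_wpM2l.
Qed.

Lemma linf_dlt j : linf (dlt j).
Proof. by exists 1 => n; rewrite /dlt; case: ifP; rewrite ?normr1 ?normr0. Qed.

Lemma linf_sum (s : seq int) (c : int -> R) :
  linf (fun n => \sum_(j <- s) c j * dlt j n).
Proof.
elim: s => [|x s IH].
  by exists 0 => n; rewrite big_nil normr0.
have := linf_comb (c x) (linf_dlt x) IH.
by congr linf; apply: funext => n; rewrite big_cons.
Qed.

Lemma sum_dlt (s : seq int) (c : int -> R) n : uniq s ->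
  \sum_(j <- s) c j * dlt j n = if n \in s then c n else 0.
Proof.
elim: s => [|x s IH] /=; first by rewrite big_nil.
move=> /andP[xs us]; rewrite big_cons IH // in_cons /dlt.
case: eqP => [->|_] /=; last by rewrite mulr0 add0r.
by rewrite (negbTE xs) mulr1 addr0.
Qed.

Variable Phi : (int -> R) -> (int -> R).
Variable C : R.
Hypothesis Hl1 : forall v, linf v -> linf (Phi v).
Hypothesis Hl2 : forall (a : R) v w, linf v -> linf w ->
     Phi (fun n => a * v n + w n) = (fun n => a * Phi v n + Phi w n).
Hypothesis HC : forall v M, (forall n, `|v n| <= M) -> forall n, `|Phi v n| <= C * M.

Lemma C_ge0 : 0 <= C.
Proof.
have h : forall n : int, `|(fun _ : int => (0:R)) n| <= 1 by move=> n; rewrite normr0.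
have := HC h 0; rewrite mulr1; apply: le_trans; exact: normr_ge0.
Qed.

Lemma Phi0 : Phi (fun _ => 0) = fun _ => 0.
Proof.
have := Hl2 (-1) linf0 linf0.
have -> : (fun n : int => -1 * (0:R) + 0) = fun _ => 0.
  by apply: funext => n; rewrite mulr0 addr0.
move=> h; apply: funext => n.
have := congr1 (fun f => f n) h => /= e.
have : Phi (fun _ => 0) n * 2 = 0.
  by rewrite {1}e; ring.
by move/eqP; rewrite mulf_eq0 pnatr_eq0 orbF => /eqP.
Qed.

Lemma PhiZ (a : R) v : linf v -> Phi (fun n => a * v n) = fun n => a * Phi v n.
Proof.
move=> hv; have := Hl2 a hv linf0; rewrite Phi0.
have -> : (fun n => a * v n + 0) = (fun n => a * v n).
  by apply: funext => n; rewrite addr0.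
move=> ->; by apply: funext => n; rewrite addr0.
Qed.

Lemma PhiD v w : linf v -> linf w -> Phi (fun n => v n + w n) = fun n => Phi v n + Phi w n.
Proof.
move=> hv hw; have := Hl2 1 hv hw.
have -> : (fun n => 1 * v n + w n) = (fun n => v n + w n).
  by apply: funext => n; rewrite mul1r.
by move=> ->; apply: funext => n; rewrite mul1r.
Qed.

Lemma PhiB v w : linf v -> linf w -> Phi (fun n => v n - w n) = fun n => Phi v n - Phi w n.
Proof.
move=> hv hw; have := Hl2 (-1) hw hv.
have -> : (fun n => -1 * w n + v n) = (fun n => v n - w n).
  by apply: funext => n; ring.
by move=> ->; apply: funext => n; ring.
Qed.

Lemma PhiB_bnd v w M : linf v -> linf w -> (forall n, `|v n - w n| <= M) ->
  forall n, `|Phi v n - Phi w n| <= C * M.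
Proof.
move=> hv hw h n; have := HC h n; by rewrite PhiB.
Qed.

Lemma Phi_fin (s : seq int) (c : int -> R) :
  Phi (fun n => \sum_(j <- s) c j * dlt j n) =
  fun n => \sum_(j <- s) c j * Phi (dlt j) n.
Proof.
elim: s => [|x s IH].
  have -> : (fun n => \sum_(j <- [::]) c j * dlt j n) = fun _ => 0.
    by apply: funext => n; rewrite big_nil.
  by rewrite Phi0; apply: funext => n; rewrite big_nil.
have -> : (fun n => \sum_(j <- x :: s) c j * dlt j n) =
   (fun n => c x * dlt x n + (fun n => \sum_(j <- s) c j * dlt j n) n).
  by apply: funext => n; rewrite big_cons.
rewrite Hl2; [|exact: linf_dlt|exact: linf_sum]; rewrite IH.
by apply: funext => n; rewrite big_cons.
Qed.

Lemma Phi_supp (s : seq int) v : uniq s -> (forall n, n \notin s -> v n = 0) ->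
  forall n, Phi v n = \sum_(j <- s) v j * Phi (dlt j) n.
Proof.
move=> us hs n.
have e : v = (fun n => \sum_(j <- s) v j * dlt j n).
  apply: funext => m; rewrite sum_dlt //; case: ifP => // /negbT; exact: hs.
by rewrite {1}e Phi_fin.
Qed.

Hypothesis Hcom : commutes_with_B Phi.

Definition aa := Phi (dlt 0).

Lemma dlt_shift j : bshift (dlt (j + 1)) = dlt j.
Proof.
apply: funext => n; rewrite /bshift /dlt.
case: (eqVneq n j) => [->|h]; first by rewrite eqxx.
case: eqP => // h'; exfalso; move/eqP: h; apply; lia.
Qed.

Lemma Phi_dlt_step j n : Phi (dlt j) n = Phi (dlt (j + 1)) (n + 1).
Proof. by rewrite -{1}dlt_shift Hcom //; exact: linf_dlt. Qed.

Lemma Phi_dlt j n : Phi (dlt j) n = aa (n - j).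
Proof.
have pos : forall k : nat, forall n, Phi (dlt k%:Z) n = aa (n - k%:Z).
  elim=> [|k IH] m; first by rewrite subr0.
  have := Phi_dlt_step k%:Z (m - 1).
  rewrite IH. have -> : m - 1 + 1 = m by ring.
  have -> : (k.+1)%:Z = k%:Z + 1 by rewrite intS addrC.
  move=> <-; congr aa; ring.
have neg : forall k : nat, forall n, Phi (dlt (- k%:Z)) n = aa (n + k%:Z).
  elim=> [|k IH] m; first by rewrite oppr0 addr0.
  rewrite Phi_dlt_step.
  have -> : - (k.+1)%:Z + 1 = - k%:Z by rewrite intS; ring.
  rewrite IH; congr aa; rewrite intS; ring.
case: j => k; first exact: pos.
rewrite NegzE neg; congr aa; ring.
Qed.


Lemma l1 (s : seq int) : uniq s -> \sum_(k <- s) `|aa k| <= C.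
Proof.
move=> us.
set s' := [seq - k | k <- s].
have us' : uniq s' by rewrite map_inj_uniq //; exact: oppr_inj.
pose v := fun n : int => if n \in s' then Num.sg (aa (- n)) else 0.
have hv : forall n, `|v n| <= 1.
  move=> n; rewrite /v; case: ifP => _; last by rewrite normr0.
  by rewrite normr_sg; case: (_ != 0).
have := HC hv 0; rewrite mulr1.
rewrite (Phi_supp us') /=; last by move=> n /negbTE; rewrite /v => ->.
rewrite big_map.
have -> : \sum_(j <- s) v (- j) * Phi (dlt (- j)) 0 = \sum_(k <- s) `|aa k|.
  rewrite big_seq_cond [RHS]big_seq_cond; apply: eq_bigr => k /andP[ks _].
  rewrite Phi_dlt /v (map_f (fun k => - k) ks) opprK add0r.
  by rewrite normrEsg.
apply: le_trans; exact: ler_norm.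
Qed.

Definition Eset := [set x : R | exists s : seq int, uniq s /\ x = \sum_(k <- s) `|aa k|]%classic.

Lemma Eset_sup : has_sup Eset.
Proof.
split; first by exists 0; exists [::]; rewrite big_nil.
exists C => x [s [us ->]]; exact: l1.
Qed.

Lemma tail (e : R) : 0 < e -> exists N : nat, forall s : seq int, uniq s ->
  (forall k, k \in s -> (N < `|k|)%N) -> \sum_(k <- s) `|aa k| <= e.
Proof.
move=> e0; have [x [s0 [us0 ->]] hx] := sup_adherent e0 Eset_sup.
exists (\max_(k <- s0) `|k|%N) => s us hs.
have uc : uniq (s ++ s0).
  rewrite cat_uniq us us0 andbT; apply/hasPn => k ks0; apply/negP => ks.
  have := hs k ks; rewrite ltnNge; move/negP; apply.
  exact: (@leq_bigmax_seq _ _ xpredT (fun k : int => `|k|%N)).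
have : \sum_(k <- s ++ s0) `|aa k| <= sup Eset.
  apply: sup_upper_bound; first exact: Eset_sup.
  by exists (s ++ s0); split.
rewrite big_cat /= => h; rewrite -(lerD2r (\sum_(k <- s0) `|aa k|)).
apply: (le_trans h); move: hx; lra.
Qed.


Lemma conv (e : R) (N : nat) : (forall s : seq int, uniq s ->
  (forall k, k \in s -> (N < `|k|)%N) -> \sum_(k <- s) `|aa k| <= e) ->
  forall (L : nat) v, (forall n, n \notin W L -> v n = 0) -> (forall n, `|v n| <= 1) ->
  forall n, `|Phi v n - \sum_(k <- W N) aa k * v (n - k)| <= e.
Proof.
move=> ht L v hsupp hv n.
rewrite (Phi_supp (W_uniq L) hsupp).
set S := [seq n - j | j <- W L].
have uS : uniq S.
  rewrite map_inj_uniq ?W_uniq // => x y /eqP; rewrite (can_eq (addKr n)) => /eqP.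
  exact: oppr_inj.
have e1 : \sum_(j <- W L) v j * Phi (dlt j) n = \sum_(k <- S) v (n - k) * aa k.
  rewrite /S [RHS]big_map; apply: eq_bigr => j _; rewrite Phi_dlt; congr (v _ * _); ring.
rewrite e1 (bigID (fun k => (`|k| <= N)%N)) /=.
have e2 : \sum_(k <- W N) aa k * v (n - k) = \sum_(k <- S | (`|k| <= N)%N) v (n - k) * aa k.
  rewrite [RHS]big_mkcond /=; symmetry; rewrite (@sum_eq_supp _ S (W N)) ?W_uniq //.
    rewrite big_seq_cond [RHS]big_seq_cond; apply: eq_bigr => k /andP[kW _].
    by rewrite -mem_W kW mulrC.
  move=> x; case: ifP => hx; last by rewrite eqxx.
  rewrite mulf_eq0 negb_or => /andP[hvx _]; split; last by rewrite mem_W.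
  apply/mapP; exists (n - x); last by ring.
  by apply/negPn/negP => /hsupp; apply/eqP.
rewrite e2 addrAC subrr add0r.
apply: (le_trans (ler_norm_sum _ _ _)).
rewrite -big_filter.
have h1 : uniq [seq i <- S | ~~ (`|i| <= N)%N] by rewrite filter_uniq.
have h2 : forall k, k \in [seq i <- S | ~~ (`|i| <= N)%N] -> (N < `|k|)%N.
  by move=> k; rewrite mem_filter => /andP[]; rewrite ltnNge.
apply: le_trans (ht _ h1 h2); apply: ler_sum => k _.
by rewrite normrM -[X in _ <= X]mul1r; apply: ler_wpM2r.
Qed.

Lemma approx_gen (e : R) (N : nat) : (forall s : seq int, uniq s ->
  (forall k, k \in s -> (N < `|k|)%N) -> \sum_(k <- s) `|aa k| <= e) ->
  forall (L : nat) (h : int -> R), (0 < L)%N -> (forall n, `|h n| <= 1) ->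
  forall n, `|Phi (fun m => gw R L m * h m) n
     - \sum_(k <- W N) aa k * (gw R L n * h (n - k))| <= e + C * (N%:R / L%:R).
Proof.
move=> ht L h L0 hh n.
have Lp : (0 : R) < L%:R by rewrite ltr0n.
set v := fun m => gw R L m * h m.
have hv1 : forall n, n \notin W L -> v n = 0.
  by move=> m hm; rewrite /v gw_supp // mul0r.
have hv2 : forall n, `|v n| <= 1.
  by move=> m; rewrite /v normrM -[1]mul1r; apply: ler_pM => //; exact: gw_bnd.
apply: le_trans (ler_distD (\sum_(k <- W N) aa k * v (n - k)) _ _) _.
apply: lerD; first exact: (conv ht hv1 hv2).
rewrite -sumrB.
have -> : \sum_(i <- W N) (aa i * v (n - i) - aa i * (gw R L n * h (n - i)))
  = \sum_(i <- W N) aa i * ((gw R L (n - i) - gw R L n) * h (n - i)).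
  by apply: eq_bigr => i _; rewrite /v; ring.
apply: (le_trans (ler_norm_sum _ _ _)).
apply: le_trans (_ : \sum_(i <- W N) `|aa i| * (N%:R / L%:R) <= _).
  rewrite big_seq_cond [X in _ <= X]big_seq_cond; apply: ler_sum => i /andP[iW _].
  rewrite normrM; apply: ler_wpM2l => //.
  rewrite normrM -[X in _ <= X]mulr1; apply: ler_pM => //.
  apply: le_trans (gw_lip _ _ _ L0) _.
  rewrite ler_pM2r ?invr_gt0 // ler_nat -mem_W //.
rewrite -mulr_suml; apply: ler_wpM2r; first by rewrite divr_ge0.
exact: l1 (W_uniq N).
Qed.

Hypothesis Hid : idempotent_map Phi.

Definition cs (N : nat) (t : R) := \sum_(k <- W N) aa k * cos (k%:~R * t).
Definition sn (N : nat) (t : R) := \sum_(k <- W N) aa k * sin (k%:~R * t).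

Lemma cs_bnd N t : `|cs N t| <= C.
Proof.
apply: le_trans (ler_norm_sum _ _ _) _; apply: le_trans (l1 (W_uniq N)).
apply: ler_sum => k _; rewrite normrM -[X in _ <= X]mulr1; apply: ler_wpM2l => //.
by rewrite ler_norml cos_le1 cos_geN1.
Qed.

Lemma sn_bnd N t : `|sn N t| <= C.
Proof.
apply: le_trans (ler_norm_sum _ _ _) _; apply: le_trans (l1 (W_uniq N)).
apply: ler_sum => k _; rewrite normrM -[X in _ <= X]mulr1; apply: ler_wpM2l => //.
by rewrite ler_norml sin_le1 sin_geN1.
Qed.

Lemma idC N L t n : \sum_(k <- W N) aa k * (gw R L n * cos ((n - k)%:~R * t)) =
  cs N t * (gw R L n * cos (n%:~R * t)) + sn N t * (gw R L n * sin (n%:~R * t)).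
Proof.
rewrite /cs /sn !mulr_suml -big_split; apply: eq_bigr => k _.
rewrite intrB mulrBl cosB /=; ring.
Qed.

Lemma idS N L t n : \sum_(k <- W N) aa k * (gw R L n * sin ((n - k)%:~R * t)) =
  cs N t * (gw R L n * sin (n%:~R * t)) - sn N t * (gw R L n * cos (n%:~R * t)).
Proof.
rewrite /cs /sn !mulr_suml -sumrB; apply: eq_bigr => k _.
rewrite intrB mulrBl sinB; ring.
Qed.

Lemma linf_trig L (h : int -> R) : (0 < L)%N -> (forall n, `|h n| <= 1) ->
  linf (fun m => gw R L m * h m).
Proof.
move=> L0 hh; exists 1 => n; rewrite normrM -[1]mul1r; apply: ler_pM => //; exact: gw_bnd.
Qed.

Lemma quad (e : R) (N : nat) : (forall s : seq int, uniq s ->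
  (forall k, k \in s -> (N < `|k|)%N) -> \sum_(k <- s) `|aa k| <= e) ->
  forall (L : nat) (t : R), (0 < L)%N ->
  `|cs N t - cs N t * cs N t + sn N t * sn N t| <= (3 * C + 1) * (e + C * (N%:R / L%:R)) /\
  `|sn N t - 2 * cs N t * sn N t| <= (3 * C + 1) * (e + C * (N%:R / L%:R)).
Proof.
move=> ht L t L0.
set d := e + C * (N%:R / L%:R).
have hc : forall n, `|cos (n%:~R * t)| <= 1 by move=> n; rewrite ler_norml cos_le1 cos_geN1.
have hs : forall n, `|sin (n%:~R * t)| <= 1 by move=> n; rewrite ler_norml sin_le1 sin_geN1.
set vc := fun m => gw R L m * cos (m%:~R * t).
set vs := fun m => gw R L m * sin (m%:~R * t).
have lc : linf vc by exact: linf_trig.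
have ls : linf vs by exact: linf_trig.
have F1 : forall n, `|Phi vc n - (cs N t * vc n + sn N t * vs n)| <= d.
  move=> n; rewrite /vc /vs -idC; exact: (approx_gen ht (h := fun m => cos (m%:~R * t))).
have F2 : forall n, `|Phi vs n - (cs N t * vs n - sn N t * vc n)| <= d.
  move=> n; rewrite /vc /vs -idS; exact: (approx_gen ht (h := fun m => sin (m%:~R * t))).
have vc0 : vc 0 = 1 by rewrite /vc gw0 mul0r cos0 mulr1.
have vs0 : vs 0 = 0 by rewrite /vs gw0 mul0r sin0 mulr0.
have PLC : forall (x y : R) v w, linf v -> linf w ->
    Phi (fun m => x * v m + y * w m) = fun m => x * Phi v m + y * Phi w m.
  move=> x y v w hv hw.
  rewrite (Hl2 x hv (w := fun m => y * w m)); last by have := linf_comb y hw linf0; congr linf; apply: funext => m; rewrite addr0.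
  by rewrite PhiZ.
split.
- have hu : linf (fun m => cs N t * vc m + sn N t * vs m).
    by have := linf_comb (cs N t) lc (linf_comb (sn N t) ls linf0); congr linf; apply: funext => m; rewrite addr0.
  have := PhiB_bnd (Hl1 lc) hu F1 0.
  rewrite Hid // PLC // => h.
  have := F1 0; have := F2 0; rewrite vc0 vs0 !mulr0 !mulr1 addr0 sub0r opprK => h2 h1.
  exact: comb1 (cs_bnd N t) (sn_bnd N t) h1 h2 h.
- have hu : linf (fun m => cs N t * vs m + (- sn N t) * vc m).
    by have := linf_comb (cs N t) ls (linf_comb (- sn N t) lc linf0); congr linf; apply: funext => m; rewrite addr0.
  have F2' : forall n, `|Phi vs n - (cs N t * vs n + (- sn N t) * vc n)| <= d.
    by move=> n; rewrite mulNr; exact: F2.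
  have := PhiB_bnd (Hl1 ls) hu F2' 0.
  rewrite Hid // PLC // mulNr => h.
  have := F1 0; have := F2 0; rewrite vc0 vs0 !mulr0 !mulr1 addr0 sub0r opprK => h2 h1.
  exact: comb2 (cs_bnd N t) (sn_bnd N t) h1 h2 h.
Qed.

Lemma coef (h : R) : 0 < h -> h <= 1/64 ->
  exists c : R, (c = 0 \/ c = 1) /\ forall k, `|aa k - c * (k == 0)%:R| <= 6 * h.
Proof.
move=> h0 h1.
have C0 := C_ge0.
set K := 3 * C + 1.
have K1 : 1 <= K by rewrite /K; lra.
have Kp : 0 < K by lra.
set e := h / K.
have e0 : 0 < e by rewrite divr_gt0.
have eh : e <= h.
  rewrite /e ler_pdivrMr // -{1}[h]mulr1 ler_wpM2l //; lra.
have [N ht] := tail e0.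
have hq : forall t, `|cs N t - cs N t * cs N t + sn N t * sn N t| <= h /\
                   `|sn N t - 2 * cs N t * sn N t| <= h.
  have b0 : 0 <= K * C * N%:R by rewrite mulr_ge0 ?mulr_ge0 // ltW.
  have eq1 : forall L : nat, (0 < L)%N -> K * (e + C * (N%:R / L%:R)) = h + K * C * N%:R / L%:R.
    move=> L L0; rewrite /e; field; by rewrite (gt_eqF Kp) pnatr_eq0 -lt0n L0.
  move=> t; split; apply: (lim_le b0) => L L0; rewrite -(eq1 L L0).
    by case: (quad ht t L0).
  by case: (quad ht t L0).
have hn : forall t, `|sn N t| <= 2 * h /\ (`|cs N t| <= 4 * h \/ `|cs N t - 1| <= 4 * h).
  by move=> t; have [q1 q2] := hq t; apply: near_lem (ltW h0) h1 q1 q2.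
have cont : continuous (fun t => cs N t).
  by apply: cont_sum => k; exact: cont_trig.
have [c [c01 hc]] := const_ivt cont (h := 4 * h) ltac:(lra) ltac:(lra) (fun t => (hn t).2).
exists c; split => // k.
case: (leqP (absz k) N) => hk; last first.
  have := ht [:: k] isT; rewrite big_seq1 => hak.
  have kn0 : (k == 0) = false by apply/negbTE/negP => /eqP kz; move: hk; rewrite kz.
  rewrite kn0 mulr0 subr0; apply: le_trans (hak _) _; first by move=> j; rewrite inE => /eqP ->.
  lra.
set M := (2 * N + 1)%N.
have M0 : (0 < M)%N by rewrite /M addn1.
have Mp : (0 : R) < M%:R by rewrite ltr0n.
set th := fun j : nat => j%:R * (pi *+ 2 / (M%:R : R)).
have th0 : forall j, 0 <= th j.
  move=> j; rewrite /th mulr_ge0 // divr_ge0 // ?ler0n // mulrn_wge0 //; exact: ltW (pi_gt0 R).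
have E1 : \sum_(0 <= j < M) (cs N (th j) * cos (k%:~R * th j) + sn N (th j) * sin (k%:~R * th j))
    = aa k * M%:R.
  transitivity (\sum_(0 <= j < M) \sum_(n <- W N) aa n * cos ((n - k)%:~R * th j)).
    apply: eq_bigr => j _; rewrite /cs /sn !mulr_suml -big_split /=.
    by apply: eq_bigr => n _; rewrite intrB mulrBl cosB /=; ring.
  rewrite exchange_big /=.
  transitivity (\sum_(n <- W N) (aa n * M%:R) * dlt n k).
    rewrite big_seq [RHS]big_seq; apply: eq_bigr => n nW.
    rewrite -mulr_sumr /th cos_sum //; last by move: nW; rewrite mem_W /M; lia.
    rewrite /dlt subr_eq0 eq_sym; case: (k == n); by rewrite ?mulr1 ?mulr0.
  by rewrite sum_dlt ?W_uniq // mem_W hk.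
have E2 : `|\sum_(0 <= j < M) (cs N (th j) * cos (k%:~R * th j) + sn N (th j) * sin (k%:~R * th j))
    - c * (M%:R * (k == 0)%:R)| <= M%:R * (6 * h).
  have -> : M%:R * (k == 0)%:R = \sum_(0 <= j < M) cos (k%:~R * th j).
    rewrite /th cos_sum //; last by rewrite /M; lia.
    by case: (k == 0); rewrite ?mulr1 ?mulr0.
  rewrite mulr_sumr -sumrB.
  apply: le_trans (ler_norm_sum _ _ _) _.
  apply: le_trans (_ : \sum_(0 <= j < M) (6 * h) <= _); last first.
    by rewrite sumr_const_nat subn0 (mulrC (M%:R)) mulr_natr.
  apply: ler_sum => j _.
  have -> : cs N (th j) * cos (k%:~R * th j) + sn N (th j) * sin (k%:~R * th j) - c * cos (k%:~R * th j)
     = (cs N (th j) - c) * cos (k%:~R * th j) + sn N (th j) * sin (k%:~R * th j) by ring.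
  apply: le_trans (ler_normD _ _) _.
  have -> : 6 * h = 4 * h * 1 + 2 * h * 1 by ring.
  apply: lerD; apply: nM.
  - exact: hc.
  - by rewrite ler_norml cos_le1 cos_geN1.
  - exact: (hn _).1.
  - by rewrite ler_norml sin_le1 sin_geN1.
rewrite E1 in E2.
have : `|(aa k - c * (k == 0)%:R) * M%:R| <= M%:R * (6 * h).
  by move: E2; congr (`|_| <= _); ring.
by rewrite normrM (ger0_norm (ltW Mp)) mulrC ler_pM2l.
Qed.

Lemma aa_cases : (forall k, aa k = 0) \/ (forall k, aa k = (k == 0)%:R).
Proof.
have [c0 [c0v hc0]] := @coef (1/64) ltac:(lra) ltac:(lra).
have key : forall k, aa k = c0 * (k == 0)%:R.
  move=> k; apply/eqP; rewrite -subr_eq0; apply/eqP; apply: small0 => h hpos hle.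
  have [c [cv hc]] := coef hpos hle.
  suff -> : c0 = c by exact: hc.
  have := hc 0; have := hc0 0; rewrite !eqxx /= !mulr1 !ler_norml => /andP[a1 a2] /andP[b1 b2].
  case: c0v => e0; case: cv => e; rewrite e0 e in a1 a2 b1 b2 *; lra.
by case: c0v => e; [left|right] => k; rewrite key e ?mul0r ?mul1r.
Qed.

End Basic.

Section Final.
Variable R : realType.
Variable Phi : (int -> R) -> (int -> R).
Variable C : R.
Hypothesis Hl1 : forall v, linf v -> linf (Phi v).
Hypothesis Hl2 : forall (a : R) v w, linf v -> linf w ->
     Phi (fun n => a * v n + w n) = (fun n => a * Phi v n + Phi w n).
Hypothesis HC : forall v M, (forall n, `|v n| <= M) -> forall n, `|Phi v n| <= C * M.
Hypothesis Hcom : commutes_with_B Phi.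

Lemma trunc (v : int -> R) : linf v -> c0 v -> forall eps, 0 < eps -> exists N0 vK,
  [/\ linf vK, (forall m, m \notin W N0 -> vK m = 0) & forall m, `|v m - vK m| <= eps].
Proof.
move=> [M hM] hc eps e0; have [N0 hN] := hc eps e0.
exists N0, (fun m => if (absz m < N0)%N then v m else 0); split.
- exists M => m; case: ifP => _ //; rewrite normr0; apply: le_trans (hM 0); exact: normr_ge0.
- by move=> m; rewrite mem_W => hm; case: ifP => // h; move: hm; rewrite ltnW.
- move=> m; case: ifP => h; first by rewrite subrr normr0 ltW.
  by rewrite subr0; apply: hN; move: h; rewrite ltnNge => /negbFE.
Qed.

Lemma sing_case : (forall k, aa Phi k = 0) -> singular_map Phi.
Proof.
move=> ha v lv cv; apply: funext => n.
apply: (zero_small (C_ge0 HC)) => eps e0.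
have [N0 [vK [lK sK dK]]] := trunc lv cv e0.
have e1 : Phi vK n = 0.
  rewrite (Phi_supp Hl2 (W_uniq N0) sK); apply: big1 => j _.
  by rewrite Phi_dlt ?ha ?mulr0.
have := PhiB_bnd Hl2 HC lv lK dK n; by rewrite e1 subr0.
Qed.

Lemma id_case : (forall k, aa Phi k = (k == 0)%:R) -> forall v, linf v -> c0 v -> Phi v = v.
Proof.
move=> ha v lv cv; apply: funext => n; apply/eqP; rewrite -subr_eq0; apply/eqP.
have C0 := C_ge0 HC.
apply: (@zero_small _ _ (C + 1)); first lra.
move=> eps e0.
have [N0 [vK [lK sK dK]]] := trunc lv cv e0.
have e1 : Phi vK n = vK n.
  rewrite (Phi_supp Hl2 (W_uniq N0) sK).
  have -> : \sum_(j <- W N0) vK j * Phi (dlt R j) n = \sum_(j <- W N0) vK j * dlt R j n.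
    by apply: eq_bigr => j _; rewrite Phi_dlt // ha /dlt subr_eq0; case: (n == j).
  rewrite sum_dlt ?W_uniq //; case: ifP => // /negbT h; by rewrite sK.
have h1 := PhiB_bnd Hl2 HC lv lK dK n; rewrite e1 in h1.
have h2 := dK n.
have -> : Phi v n - v n = (Phi v n - vK n) - (v n - vK n) by ring.
apply: le_trans (ler_normB _ _) _; lra.
Qed.

End Final.


Unset Implicit Arguments.

Theorem theorem2p3 (R : realType) (Phi : (int -> R) -> (int -> R)) :
  linf_bounded_map Phi -> commutes_with_B Phi -> idempotent_map Phi ->
  singular_map Phi \/
  exists Psi : (int -> R) -> (int -> R),
    [/\ linf_linear_map Psi, singular_map Psi, idempotent_map Psi,
        commutes_with_B Psi &
        forall v, linf v -> Phi v = (fun n => v n - Psi v n)].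
Proof.
move=> [[Hl1 Hl2] [C HC]] Hcom Hid.
case: (aa_cases Hl1 Hl2 HC Hcom Hid) => ha.
  by left; exact: (sing_case Hl2 HC Hcom ha).
right; exists (fun v n => v n - Phi v n); split.
- split.
    move=> v lv; have := linf_comb (-1) (Hl1 _ lv) lv; congr linf.
    by apply: funext => n; ring.
  move=> a v w lv lw; rewrite Hl2 //; apply: funext => n; ring.
- move=> v lv cv; rewrite (id_case Hl2 HC Hcom ha lv cv); apply: funext => n; exact: subrr.
- move=> v lv; apply: funext => n.
  rewrite (PhiB Hl2 lv (Hl1 _ lv)) Hid //; ring.
- move=> v lv; rewrite Hcom //; apply: funext => n; by rewrite /bshift.
- by move=> v lv; apply: funext => n; ring.
Qed.
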